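(* Let $0<p<1$ and let $X_p$ be a $\mathbb{P}^1(\mathbb{R})$-valued random variable satisfying $X_p \sim \frac{1}{X_p}+\epsilon_p$ with $\epsilon_p\sim\mathrm{Bernoulli}(p)$ independent of $X_p$. Then \[ \mathbb{E}\big[\log(X_p)\mathbf{1}_{\{X_p<1\}}\big]=(p-1)\,\mathbb{E}\big[\log(X_p)\mathbf{1}_{\{X_p>1\}}\big], \] \[ \mathbb{E}\big[\log(X_p)\mathbf{1}_{\{X_p>1\}}\big]=\frac1p\,\mathbb{E}[\log X_p], \qquad \mathbb{E}\big[\log(X_p)\mathbf{1}_{\{X_p<1\}}\big]=\frac{p-1}{p}\,\mathbb{E}[\log X_p]. \]
   Context: $\mathbb{P}^1(\mathbb{R})$ is identified with $\mathbb{R}\cup\{\infty\}$ (with $1/0=\infty$, $1/\infty=0$). $\epsilon_p\sim\mathrm{Bernoulli}(p)$ means $\mathbb{P}(\epsilon_p=1)=p$, $\mathbb{P}(\epsilon_p=0)=1-p$. The law of such $X_p$ is unique, atomless, $X_p\in(0,\infty)$ a.s., and $0<\mathbb{E}[\log X_p]<\infty$. *)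

(* Defs.v *)
From HB Require Import structures.
From mathcomp Require Import all_boot all_order all_algebra.
From mathcomp Require Import all_classical all_reals all_analysis.
Set Implicit Arguments. Unset Strict Implicit. Unset Printing Implicit Defensive.
Import Order.TTheory GRing.Theory Num.Theory.
Local Open Scope classical_set_scope.
Local Open Scope ring_scope.

(* The real projective line P^1(R) = R ∪ {∞}: [Some r] is the real r,
   [None] is the point at infinity. *)
Definition P1 (R : realType) : Type := option R.

HB.instance Definition _ (R : realType) := Choice.on (P1 R).
HB.instance Definition _ (R : realType) := isPointed.Build (P1 R) None.

Section P1_measurable.
Variable R : realType.

(* Borel sigma-algebra of P^1(R): a set is measurable iff its trace on R
   is a Borel set (the point at infinity is a closed singleton). *)
Definition P1_measurable : set (set (P1 R)) :=
  fun A => measurable (Some @^-1` A : set R).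

Lemma P1_measurable0 : P1_measurable set0.
Proof. by rewrite /P1_measurable preimage_set0; exact: measurable0. Qed.

Lemma P1_measurableC A : P1_measurable A -> P1_measurable (~` A).
Proof. by rewrite /P1_measurable preimage_setC => mA; exact: measurableC. Qed.

Lemma P1_measurable_bigcup (F : (set (P1 R))^nat) :
  (forall i, P1_measurable (F i)) -> P1_measurable (\bigcup_i F i).
Proof. by rewrite /P1_measurable preimage_bigcup => mF; exact: bigcupT_measurable. Qed.

HB.instance Definition _ := @isMeasurable.Build default_measure_display (P1 R)
  P1_measurable P1_measurable0 P1_measurableC P1_measurable_bigcup.

Definition P1inv (x : P1 R) : P1 R :=
  match x with
  | Some r => if r == 0 then None else Some r^-1
  | None => Some 0
  end.

Definition P1addr (x : P1 R) (e : R) : P1 R :=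
  match x with
  | Some r => Some (r + e)
  | None => None
  end.

(* log on P^1(R) with values in the extended reals; log ∞ = +oo.
   (Only used where X > 0 a.s.; the value on nonpositive reals is the
   library's ln convention and is irrelevant, being a null event.) *)
Definition P1log (x : P1 R) : \bar R :=
  match x with
  | Some r => (ln r)%:E
  | None => +oo%E
  end.

Definition P1lt1 (x : P1 R) : bool :=
  match x with Some r => r < 1 | None => false end.
Definition P1gt1 (x : P1 R) : bool :=
  match x with Some r => 1 < r | None => true end.

End P1_measurable.

(* Main.v *)
Require Import Defs.
From HB Require Import structures.
From mathcomp Require Import all_boot all_order all_algebra.
From mathcomp Require Import all_classical all_reals all_analysis.
Import Order.TTheory GRing.Theory Num.Theory.
Local Open Scope classical_set_scope.
Local Open Scope ring_scope.
From mathcomp Require Import measurable_realfun.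
From mathcomp Require Import ring lra.
Section Aux.
Variable R : realType.

Lemma mSome : measurable_fun [set: R] (@Some R : R -> P1 R).
Proof. by move=> _ A mA; rewrite setTI. Qed.

Lemma P1_mfun d' (U : measurableType d') (f : P1 R -> U) :
  measurable_fun setT (f \o Some) -> measurable_fun setT f.
Proof.
move=> mf _ B mB; rewrite setTI.
by have := mf measurableT B mB; rewrite setTI.
Qed.

Definition hP1 (x : P1 R) : \bar R :=
  match x with Some r => if 1 < r then (ln r)%:E else 0%E | None => +oo%E end.
Definition gP1 (x : P1 R) : \bar R :=
  match x with Some r => if r < 1 then (- ln r)%:E else 0%E | None => 0%E end.

Lemma hP1_ge0 x : (0 <= hP1 x)%E.
Proof.
case: x => [r|] /=; last exact: leey.
case: ifP => // h; rewrite lee_fin; apply: ln_ge0; exact: ltW.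
Qed.

Lemma gP1_ge0 x : (0 <= gP1 x)%E.
Proof.
case: x => [r|] //=; case: ifP => // h; rewrite lee_fin oppr_ge0; apply: ln_le0; exact: ltW.
Qed.

Lemma mhP1 : measurable_fun setT hP1.
Proof.
apply: P1_mfun => /=.
apply: measurable_fun_ifT.
- by apply: measurable_fun_ltr => //; exact: measurable_cst.
- by apply/measurable_EFinP; exact: measurable_ln.
- exact: measurable_cst.
Qed.

Lemma mgP1 : measurable_fun setT gP1.
Proof.
apply: P1_mfun => /=.
apply: measurable_fun_ifT.
- by apply: measurable_fun_ltr => //; exact: measurable_cst.
- by apply/measurable_EFinP; apply: measurable_funN; exact: measurable_ln.
- exact: measurable_cst.
Qed.

Lemma P1log_hg x : P1log x = (hP1 x - gP1 x)%E.
Proof.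
case: x => [r|] /=; last by [].
case: (ltgtP 1 r) => h.
- by rewrite sube0.
- by rewrite sub0e -EFinN opprK.
- by rewrite -h ln1 sube0.
Qed.

Lemma lt1_g x : (if P1lt1 x then P1log x else 0)%E = (- gP1 x)%E.
Proof.
case: x => [r|] /=; first case: ifP => _.
all: rewrite ?EFinN ?oppeK ?oppe0 ?oppr0 //.
Qed.

Lemma gt1_h x : (if P1gt1 x then P1log x else 0)%E = hP1 x.
Proof. by case: x => [r|] //=; case: ifP. Qed.

Lemma hP1_le x : (hP1 x <= `|P1log x|)%E.
Proof.
case: x => [r|] //=; case: ifP => _ //; rewrite ?abse_ge0 //.
by rewrite lee_fin ler_norm.
Qed.

Lemma gP1_le x : (gP1 x <= `|P1log x|)%E.
Proof.
case: x => [r|] //=; case: ifP => _ //; rewrite ?abse_ge0 //.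
by rewrite lee_fin -normrN ler_norm.
Qed.

Lemma minv : measurable_fun [set: R] (@GRing.inv R).
Proof.
have -> : @GRing.inv R = ((fun x => (if 0 < x then expR (- ln x) else 0))
   \- (fun x => if x < 0 then expR (- ln (- x)) else 0)).
  apply/funext => x /=; case: (ltgtP 0 x) => h.
  - by rewrite subr0 expRN lnK.
  - rewrite sub0r expRN lnK; first by rewrite invrN opprK.
    by rewrite posrE oppr_gt0.
  - by rewrite -h invr0 subr0.
apply: measurable_funB; apply: measurable_fun_ifT.
- by apply: measurable_fun_ltr => //; exact: measurable_cst.
- apply: measurableT_comp; first exact: measurable_expR.
  by apply: measurable_funN; exact: measurable_ln.
- exact: measurable_cst.
- by apply: measurable_fun_ltr => //; exact: measurable_cst.
- apply: measurableT_comp; first exact: measurable_expR.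
  apply: measurable_funN; apply: measurableT_comp; first exact: measurable_ln.
  exact: measurable_funN.
- exact: measurable_cst.
Qed.

Definition P1r (x : P1 R) : R := match x with Some r => r | None => 0 end.

Lemma mP1r : measurable_fun setT P1r.
Proof. by apply: P1_mfun; exact: measurable_id. Qed.

End Aux.
Arguments P1r {R}.
Arguments hP1 {R}.
Arguments gP1 {R}.
Section Aux2.
Variable R : realType.

Lemma mY d (T : measurableType d) (X : T -> P1 R) (eps : T -> R) :
  measurable_fun setT X -> measurable_fun setT eps ->
  measurable_fun setT (fun w => P1addr (P1inv (X w)) (eps w)).
Proof.
move=> mX meps.
have -> : (fun w => P1addr (P1inv (X w)) (eps w)) =
  (fun w => if (X w == Some 0) then None else Some ((P1r (X w))^-1 + eps w)).
  apply/funext => w; case: (X w) => [r|] /=.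
  - rewrite (inj_eq (@Some_inj _)); by case: ifP.
  - by rewrite invr0.
apply: measurable_fun_ifT.
- apply: (measurableT_comp (f := fun x : P1 R => x == Some 0)) => //.
  apply: P1_mfun => /=.
  have -> : ((fun x : P1 R => x == Some 0) \o Some) = (fun r : R => r == 0).
    by apply/funext => r /=; rewrite (inj_eq (@Some_inj _)).
  by apply: measurable_fun_eqr => //; exact: measurable_cst.
- exact: measurable_cst.
- apply: (measurableT_comp (f := (@Some R : R -> P1 R))); first exact: (mSome R).
  apply: measurable_funD => //.
  apply: (measurableT_comp (f := @GRing.inv R)); first exact: (minv R).
  exact: (measurableT_comp (mP1r R)).
Qed.

End Aux2.
Lemma P1_measurableP (R : realType) (A : set (P1 R)) :
  measurable (Some @^-1` A : set R) -> measurable A.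
Proof. by []. Qed.

Section PF.
Variables (R : realType) (d : measure_display) (T : measurableType d).

Definition pfm (mu : {measure set T -> \bar R}) (X : T -> P1 R)
  (mX : measurable_fun setT X) : {measure set (P1 R) -> \bar R}.
Proof. refine (pushforward mu X : {measure set (P1 R) -> \bar R}). exact: mX. Defined.
Arguments pfm mu {X} mX.

Lemma pfmE mu (X : T -> P1 R) (mX : measurable_fun setT X) A : pfm mu mX A = mu (X @^-1` A).
Proof. by []. Qed.

Lemma int_pfm mu X (mX : measurable_fun setT X) (f : P1 R -> \bar R) :
  measurable_fun setT f -> (forall y, (0 <= f y)%E) ->
  (\int[pfm mu mX]_y f y = \int[mu]_w f (X w))%E.
Proof.
move=> mf f0.
have := ge0_integral_pushforward mX mu measurableT mf (fun y _ => f0 y).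
by rewrite preimage_setT.
Qed.
End PF.
Arguments pfm {R d T} mu {X} mX.
Theorem lemma3p2 (R : realType) (d : measure_display) (T : measurableType d)
  (P : probability T R) (p : R) (X : T -> P1 R) (eps : T -> R) :
  0 < p -> p < 1 ->
  measurable_fun setT X -> measurable_fun setT eps ->
  (* eps ~ Bernoulli(p) *)
  P (eps @^-1` [set 1]) = p%:E ->
  P (eps @^-1` [set 0]) = (1 - p)%:E ->
  (* eps independent of X *)
  (forall (A : set (P1 R)) (B : set R), measurable A -> measurable B ->
     P (X @^-1` A `&` eps @^-1` B) = (P (X @^-1` A) * P (eps @^-1` B))%E) ->
  (* X ~ 1/X + eps *)
  (forall A : set (P1 R), measurable A ->
     P (X @^-1` A) = P ((fun w => P1addr (P1inv (X w)) (eps w)) @^-1` A)) ->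
  (* standing facts from the context: X in (0,oo) a.s., log X integrable *)
  P [set w | exists r : R, X w = Some r /\ 0 < r] = 1%E ->
  P.-integrable setT (fun w => P1log (X w)) ->
  (\int[P]_w (if P1lt1 (X w) then P1log (X w) else 0%E)
     = (p - 1)%:E * \int[P]_w (if P1gt1 (X w) then P1log (X w) else 0%E))%E
  /\ (\int[P]_w (if P1gt1 (X w) then P1log (X w) else 0%E)
     = (p^-1)%:E * \int[P]_w P1log (X w))%E
  /\ (\int[P]_w (if P1lt1 (X w) then P1log (X w) else 0%E)
     = ((p - 1) / p)%:E * \int[P]_w P1log (X w))%E.
Proof.
move=> p0 p1 mX meps Peps1 Peps0 indep law Xpos intL.
pose Y := fun w => P1addr (P1inv (X w)) (eps w).
have mYf : measurable_fun setT Y := @mY R _ T X eps mX meps.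
pose E := eps @^-1` [set 0].
have mE : measurable E.
  by rewrite -[E]setTI; apply: meps => //; exact: measurable_set1.
have mhX : measurable_fun setT (fun w => hP1 (X w)).
  exact: (measurableT_comp (mhP1 R) mX).
have mgX : measurable_fun setT (fun w => gP1 (X w)).
  exact: (measurableT_comp (mgP1 R) mX).
pose a := (\int[P]_w hP1 (X w))%E.
pose b := (\int[P]_w gP1 (X w))%E.
have Ha : (\int[P]_w (if P1gt1 (X w) then P1log (X w) else 0%E))%E = a.
  by apply: eq_integral => w _; rewrite gt1_h.
have Hb : (\int[P]_w (if P1lt1 (X w) then P1log (X w) else 0%E))%E = (- b)%E.
  rewrite -integral_ge0N; last by move=> w _; exact: gP1_ge0.
  by apply: eq_integral => w _; rewrite lt1_g.
have iL := intL; move/integrableP: iL => [mL Lfin].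
have habs : measurable_fun setT (fun w => `|P1log (X w)|)%E.
  exact: measurableT_comp.
have afin : (a \is a fin_num)%E.
  rewrite ge0_fin_numE; last by apply: integral_ge0 => w _; exact: hP1_ge0.
  apply: le_lt_trans Lfin; apply: ge0_le_integral => //.
  - by move=> w _; exact: hP1_ge0.
  - by move=> w _; exact: hP1_le.
have bfin : (b \is a fin_num)%E.
  rewrite ge0_fin_numE; last by apply: integral_ge0 => w _; exact: gP1_ge0.
  apply: le_lt_trans Lfin; apply: ge0_le_integral => //.
  - by move=> w _; exact: gP1_ge0.
  - by move=> w _; exact: gP1_le.
have ihX : P.-integrable setT (fun w => hP1 (X w)).
  apply/integrableP; split => //.
  under eq_integral do rewrite gee0_abs ?hP1_ge0//.
  by rewrite -ge0_fin_numE // integral_ge0 // => w _; exact: hP1_ge0.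
have igX : P.-integrable setT (fun w => gP1 (X w)).
  apply/integrableP; split => //.
  under eq_integral do rewrite gee0_abs ?gP1_ge0//.
  by rewrite -ge0_fin_numE // integral_ge0 // => w _; exact: gP1_ge0.
have HL : (\int[P]_w P1log (X w))%E = (a - b)%E.
  rewrite -integralB //.
  by apply: eq_integral => w _; rewrite P1log_hg.
have Key : b = ((1 - p)%:E * a)%E.
  pose k := fun w => if eps w == 0 then hP1 (X w) else 0%E.
  have mk : measurable_fun setT k.
    apply: measurable_fun_ifT => //.
    by apply: measurable_fun_eqr => //; exact: measurable_cst.
  have k0 : forall w, (0 <= k w)%E.
    by move=> w; rewrite /k; case: ifP => _ //; exact: hP1_ge0.
  have S1 : b = (\int[pushforward P X]_y gP1 y)%E.
    rewrite (ge0_integral_pushforward mX P measurableT (mgP1 R)); last first.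
      by move=> y _; exact: gP1_ge0.
    by rewrite preimage_setT.
  have S2 : (\int[pushforward P X]_y gP1 y)%E = (\int[pushforward P Y]_y gP1 y)%E.
    by apply: eq_measure_integral => A mA _; exact: law.
  have S3 : (\int[pushforward P Y]_y gP1 y)%E = (\int[P]_w gP1 (Y w))%E.
    rewrite (ge0_integral_pushforward mYf P measurableT (mgP1 R)); last first.
      by move=> y _; exact: gP1_ge0.
    by rewrite preimage_setT.
  have S4 : (\int[P]_w gP1 (Y w))%E = (\int[P]_w k w)%E.
    pose G1 := [set w | exists r : R, X w = Some r /\ 0 < r].
    pose G2 := eps @^-1` [set 0] `|` eps @^-1` [set 1].
    have mG1 : measurable G1.
      have -> : G1 = X @^-1` [set x : P1 R | exists r, x = Some r /\ 0 < r] by [].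
      rewrite -[X @^-1` _]setTI; apply: mX => //.
      apply: P1_measurableP.
      rewrite (_ : Some @^-1` _ = `]0, +oo[%classic); first exact: measurable_itv.
      apply/seteqP; split => x /=.
      - by move=> [r [[<-] r0]]; rewrite in_itv /= andbT.
      - by rewrite in_itv /= andbT => x0; exists x.
    have mG2 : measurable G2.
      by apply: measurableU; rewrite -[_ @^-1` _]setTI; apply: meps => //;
        exact: measurable_set1.
    have PG2 : P G2 = 1%E.
      rewrite measureU //.
      - have -> : (1 = (1 - p)%:E + p%:E :> \bar R)%E by rewrite -EFinD subrK.
        by congr (_ + _)%E; [exact: Peps0|exact: Peps1].
      - by rewrite -[_ @^-1` _]setTI; apply: meps => //; exact: measurable_set1.
      - apply/seteqP; split => x //= [-> h].
        by move: h; apply/eqP; rewrite eq_sym oner_eq0.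
    pose N := ~` G1 `|` ~` G2.
    have PN : P N = 0%E.
      apply/eqP; rewrite eq_le; apply/andP; split; last exact: measure_ge0.
      apply: le_trans (measureU2 _ _ _) _.
      - exact: measurableC.
      - exact: measurableC.
      change (P (~` G1) + P (~` G2) <= 0)%E.
      rewrite (probability_setC P mG1) (probability_setC P mG2) PG2 /G1 Xpos.
      by rewrite subee // adde0.
    apply: ge0_ae_eq_integral => //.
    all: try exact: measurableT_comp (mgP1 R) mYf.
    all: try (by move=> w _; exact: gP1_ge0).
    all: try (by move=> w _; exact: k0).
    exists N; split => //.
    - by apply: measurableU; exact: measurableC.
    move=> w /= Hw.
    case: (pselect (G1 w)) => h1; last by left.
    case: (pselect (G2 w)) => h2; last by right.
    exfalso; apply: Hw => _.
    case: h1 => r [Xw r0].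
    rewrite /Y /k Xw /= (gt_eqF r0).
    case: h2 => /= ->.
    - rewrite eqxx addr0 /= invf_lt1 //; case: ifP => // _.
      by rewrite lnV ?opprK // posrE.
    - rewrite oner_eq0 /=.
      have hi : 0 < r^-1 by rewrite invr_gt0.
      rewrite ifF //; apply/negbTE; rewrite -leNgt; lra.
  have S5 : (\int[P]_w k w)%E = (\int[P]_(w in E) hP1 (X w))%E.
    rewrite [RHS]integral_mkcond; apply: eq_integral => w _.
    rewrite /patch /k /E; case: ifPn => h.
    - by rewrite mem_set //=; exact/eqP.
    - by rewrite memNset //=; move/eqP: h.
  have S6a : (\int[P]_(w in E) hP1 (X w))%E = (\int[mrestr P mE]_(w in E) hP1 (X w))%E.
    apply: eq_measure_integral => A mA AE.
    by change (P A = P (A `&` E)); rewrite setIidl.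
  have S6c : (\int[mrestr P mE]_(w in ~` E) hP1 (X w))%E = 0%E.
    rewrite (eq_measure_integral mzero); first exact: integral_measure_zero.
    move=> A mA AE; change (P (A `&` E) = 0%E).
    rewrite (_ : A `&` E = set0) ?measure0 //.
    by apply/seteqP; split => x //= [Ax Ex]; exact: AE x Ax Ex.
  have S6b : (\int[mrestr P mE]_w hP1 (X w))%E = (\int[mrestr P mE]_(w in E) hP1 (X w))%E.
    rewrite -(setUv E) ge0_integral_setU //.
    all: try (by rewrite setUv).
    all: try (by move=> w _; exact: hP1_ge0).
    all: try (by apply/disj_set2P; rewrite setICr).
    all: try exact: measurableC.
    by rewrite S6c adde0.
  have c0 : 0 <= 1 - p by rewrite subr_ge0 ltW.
  pose c : {nonneg R} := NngNum c0.
  have S6d : (\int[mrestr P mE]_w hP1 (X w))%E = (\int[pfm (mrestr P mE) mX]_y hP1 y)%E.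
    by rewrite int_pfm //; [exact: (mhP1 R)|exact: hP1_ge0].
  have S6e : (\int[pfm (mrestr P mE) mX]_y hP1 y)%E = (\int[mscale c (pfm P mX)]_y hP1 y)%E.
    apply: eq_measure_integral => A mA _.
    rewrite /mscale pfmE /=.
    change (P (X @^-1` A `&` E) = (1 - p)%:E * P (X @^-1` A))%E.
    rewrite (indep _ _ mA (measurable_set1 0)).
    by rewrite Peps0 muleC.
  have S6f : (\int[mscale c (pfm P mX)]_y hP1 y)%E = ((1 - p)%:E * a)%E.
    rewrite ge0_integral_mscale //; last by move=> y _; exact: hP1_ge0.
      by rewrite int_pfm //; [exact: (mhP1 R)|exact: hP1_ge0].
    exact: (mhP1 R).
  by rewrite S1 S2 S3 S4 S5 S6a -S6b S6d S6e S6f.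
rewrite Ha Hb HL Key -(fineK afin).
have pn0 : p != 0 by rewrite gt_eqF.
split; [|split]; rewrite -?EFinM -?EFinN -?EFinB -?EFinM; congr EFin.
- by ring.
- by field.
- by field.
Qed.
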